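(* Let $A$ be the weighted shift on $\mathcal{H}$ with weights $\{1/n\}_{n\ge1}$. If $r_1>r_2\ge0$, then $\|(z-r_1A)^{-1}\|\ge\|(z-r_2A)^{-1}\|$ for every complex $z\neq0$.
   Context: $\mathcal{H}$ is a separable infinite-dimensional complex Hilbert space with orthonormal basis $\{e_n\}_{n=0}^\infty$, and $A$ is defined by $Ae_n=\frac{1}{n+1}e_{n+1}$ for $n\ge0$. $A$ is quasinilpotent. *)

(* Defs.v *)
From Stdlib Require Import Reals.
From Coquelicot Require Import Coquelicot.

(* The Hilbert space H is modelled as l^2(N) over C, with e_n the
   standard basis vectors (coordinate sequences). *)
Definition seqC := nat -> C.

Definition in_l2 (x : seqC) : Prop := ex_series (fun n => (Cmod (x n)) ^ 2).

Definition l2norm (x : seqC) : R := sqrt (Series (fun n => (Cmod (x n)) ^ 2)).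

(* The weighted shift A e_n = 1/(n+1) e_{n+1}, i.e. (A x)_0 = 0 and
   (A x)_{m+1} = x_m / (m+1). *)
Definition shiftA (x : seqC) : seqC :=
  fun n => match n with
           | O => 0%C
           | S m => (x m / RtoC (INR (S m)))%C
           end.

Definition zmrA (z : C) (r : R) (x : seqC) : seqC :=
  fun n => (z * x n - RtoC r * shiftA x n)%C.

Definition is_l2_inverse (S T : seqC -> seqC) : Prop :=
  forall x, in_l2 x -> in_l2 (T x) /\ S (T x) = x /\ T (S x) = x.

Definition opnorm (T : seqC -> seqC) : Rbar :=
  Lub_Rbar (fun t => exists x, in_l2 x /\ l2norm x <= 1 /\ t = l2norm (T x)).

(* Main.v *)
Require Import Defs.
From Stdlib Require Import Reals Lra Lia FunctionalExtensionality.
From Coquelicot Require Import Coquelicot.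

Fixpoint Tr (z : C) (r : R) (y : seqC) (n : nat) : C :=
  match n with
  | O => (y O / z)%C
  | S m => ((y (S m) + RtoC r * (Tr z r y m / RtoC (INR (S m)))) / z)%C
  end.

Lemma INRS_neq (m : nat) : RtoC (INR (S m)) <> 0%C.
Proof. intro H. apply RtoC_inj in H. pose proof (pos_INR m). rewrite S_INR in H. lra. Qed.

Lemma zmrA_Tr (z : C) (r : R) (y : seqC) : z <> 0%C -> zmrA z r (Tr z r y) = y.
Proof.
  intros Hz. apply functional_extensionality. intros [|m]; unfold zmrA, shiftA; cbn [Tr].
  - field. auto.
  - field. split; auto. apply INRS_neq.
Qed.

Lemma Tr_zmrA (z : C) (r : R) (x : seqC) : z <> 0%C -> forall n, Tr z r (zmrA z r x) n = x n.
Proof.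
  intros Hz n. induction n as [|m IH]; cbn [Tr].
  - unfold zmrA, shiftA. field. auto.
  - rewrite IH. unfold zmrA, shiftA. field. split; auto. apply INRS_neq.
Qed.

Lemma partial_bound (w : nat -> R) (M : R) :
  (forall n, 0 <= w n) -> (forall n, sum_n w n <= M) -> ex_series w.
Proof.
  intros H0 HM.
  destruct (ex_finite_lim_seq_incr (sum_n w) M) as [l Hl].
  - intro n. rewrite sum_Sn. unfold plus; simpl. specialize (H0 (S n)). lra.
  - exact HM.
  - exists l. exact Hl.
Qed.

Lemma sum_le_Series (w : nat -> R) :
  (forall n, 0 <= w n) -> ex_series w -> forall n, sum_n w n <= Series w.
Proof.
  intros H0 Hw n. apply is_lim_seq_incr_compare.
  - apply (Series_correct w Hw).
  - intro k. rewrite sum_Sn. unfold plus; simpl. specialize (H0 (S k)). lra.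
Qed.

Lemma l2_rec (u v : nat -> R) (B : R) (N : nat) :
  0 <= B -> (forall n, 0 <= u n) -> ex_series (fun n => v n ^ 2) ->
  (forall m, (N <= m)%nat -> u (S m) ^ 2 <= B * v (S m) ^ 2 + u m ^ 2 / 2) ->
  ex_series (fun n => u n ^ 2).
Proof.
  intros HB Hu Hv Hrec.
  set (W := fun k => u (N + k)%nat ^ 2).
  set (V := fun k => v (N + S k)%nat ^ 2).
  assert (HV : ex_series V).
  { apply (ex_series_incr_n (fun n => v n ^ 2) (S N)) in Hv.
    eapply ex_series_ext; [|exact Hv]. intro k. unfold V. simpl.
    replace (N + S k)%nat with (S (N + k)) by lia. reflexivity. }
  assert (HV0 : forall k, 0 <= V k) by (intro; unfold V; apply pow2_ge_0).
  assert (HW0 : forall k, 0 <= W k) by (intro; unfold W; apply pow2_ge_0).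
  assert (Hst : forall k, 2 * W (S k) <= 2 * B * V k + W k).
  { intro k. unfold W, V. replace (N + S k)%nat with (S (N + k)) by lia.
    specialize (Hrec (N + k)%nat ltac:(lia)). lra. }
  assert (Hc : forall K, sum_n W (S K) + W (S K) <= 2 * W O + 2 * B * sum_n V K).
  { induction K as [|K IH].
    - rewrite sum_Sn, !sum_O. unfold plus; simpl. specialize (Hst O). lra.
    - rewrite (sum_Sn W (S K)), (sum_Sn V K). unfold plus; simpl.
      specialize (Hst (S K)). lra. }
  apply (ex_series_incr_n (fun n => u n ^ 2) N).
  apply (partial_bound W (2 * W O + 2 * B * Series V)); [exact HW0|].
  intros [|K].
  - rewrite sum_O. specialize (HW0 O). pose proof (sum_le_Series V HV0 HV O).
    rewrite sum_O in H. specialize (HV0 O). nra.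
  - specialize (Hc K). pose proof (sum_le_Series V HV0 HV K). specialize (HW0 (S K)). nra.
Qed.

Fixpoint Q (c r : R) (x : seqC) (n : nat) : R :=
  match n with
  | O => Cmod (x O) / c
  | S m => (Cmod (x (S m)) + r * Q c r x m / INR (S m)) / c
  end.

Lemma INRS_pos (m : nat) : 0 < INR (S m).
Proof. rewrite S_INR. pose proof (pos_INR m). lra. Qed.

Lemma Q_ge0 c r x n : 0 < c -> 0 <= r -> 0 <= Q c r x n.
Proof.
  intros Hc Hr. induction n as [|m IH]; cbn [Q].
  - apply Rmult_le_pos; [apply Cmod_ge_0 | left; apply Rinv_0_lt_compat; auto].
  - apply Rmult_le_pos; [|left; apply Rinv_0_lt_compat; auto].
    apply Rplus_le_le_0_compat; [apply Cmod_ge_0|].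
    apply Rmult_le_pos; [apply Rmult_le_pos; auto|left; apply Rinv_0_lt_compat, INRS_pos].
Qed.

Lemma Q_mono c r1 r2 x n : 0 < c -> 0 <= r2 -> r2 <= r1 -> Q c r2 x n <= Q c r1 x n.
Proof.
  intros Hc Hr2 Hr. induction n as [|m IH]; cbn [Q]; [lra|].
  apply Rmult_le_compat_r; [left; apply Rinv_0_lt_compat; auto|].
  apply Rplus_le_compat_l. apply Rmult_le_compat_r; [left; apply Rinv_0_lt_compat, INRS_pos|].
  pose proof (Q_ge0 c r2 x m Hc Hr2). pose proof (Q_ge0 c r1 x m Hc ltac:(lra)).
  apply Rmult_le_compat; lra.
Qed.

Lemma Q_ext c r x y : (forall n, Cmod (y n) = Cmod (x n)) -> forall n, Q c r y n = Q c r x n.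
Proof. intros H n. induction n as [|m IH]; cbn [Q]; rewrite H; [|rewrite IH]; reflexivity. Qed.

Lemma Tr_le_Q (z : C) (r : R) (x : seqC) n : z <> 0%C -> 0 <= r -> Cmod (Tr z r x n) <= Q (Cmod z) r x n.
Proof.
  intros Hz Hr. induction n as [|m IH]; cbn [Tr Q].
  - rewrite Cmod_div by auto. lra.
  - rewrite Cmod_div by auto. unfold Rdiv.
    assert (0 < Cmod z). { destruct (Rle_lt_or_eq_dec 0 (Cmod z) (Cmod_ge_0 z)); auto.
      exfalso. apply Hz, Cmod_eq_0. auto. }
    apply Rmult_le_compat_r; [left; apply Rinv_0_lt_compat; auto|].
    eapply Rle_trans; [apply Cmod_triangle|]. apply Rplus_le_compat_l.
    rewrite Cmod_mult, Cmod_div by apply INRS_neq. rewrite !Cmod_R.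
    rewrite (Rabs_pos_eq r Hr), (Rabs_pos_eq _ (Rlt_le _ _ (INRS_pos m))).
    unfold Rdiv. rewrite <- Rmult_assoc. apply Rmult_le_compat_r; [left; apply Rinv_0_lt_compat, INRS_pos|].
    apply Rmult_le_compat_l; auto.
Qed.

Lemma Q_l2 c r x : 0 < c -> 0 <= r -> in_l2 x -> ex_series (fun n => Q c r x n ^ 2).
Proof.
  intros Hc Hr Hx.
  destruct (INR_unbounded (2 * r / c)) as [N HN].
  apply (l2_rec (Q c r x) (fun n => Cmod (x n)) (2 / c ^ 2) N).
  - apply Rmult_le_pos; [lra|]. left; apply Rinv_0_lt_compat; apply pow_lt; auto.
  - intro; apply Q_ge0; auto.
  - exact Hx.
  - intros m Hm. cbn [Q].
    set (p := Cmod (x (S m))). set (q := Q c r x m). set (n := INR (S m)).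
    assert (Hn : INR N + 1 <= n). { unfold n. rewrite S_INR. apply le_INR in Hm. lra. }
    set (t := r / (c * n)).
    assert (Hnp : 0 < n) by (unfold n; apply INRS_pos).
    assert (Ht0 : 0 <= t). { unfold t. apply Rmult_le_pos; auto. left; apply Rinv_0_lt_compat, Rmult_lt_0_compat; auto. }
    assert (Ht1 : t <= 1/2).
    { unfold t. apply (Rmult_le_reg_r (c * n)); [apply Rmult_lt_0_compat; auto|].
      unfold Rdiv. rewrite Rmult_assoc, Rinv_l by (apply Rgt_not_eq, Rmult_lt_0_compat; auto).
      assert (2 * r / c * c = 2 * r) by (field; lra). nra. }
    assert (E : (p + r * q / n) / c = p / c + t * q) by (unfold t; field; lra).
    rewrite E.
    assert (E2 : 2 / c ^ 2 * p ^ 2 = 2 * (p / c) ^ 2) by (field; lra).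
    rewrite E2. set (a := p / c).
    assert (0 <= q ^ 2) by apply pow2_ge_0.
    assert (t * t <= 1/4) by nra.
    assert (0 <= (a - t * q) ^ 2) by apply pow2_ge_0.
    assert (t * t * q ^ 2 <= 1/4 * q ^ 2) by (apply Rmult_le_compat_r; auto).
    nra.
Qed.

Lemma Tr_l2 (z : C) (r : R) (x : seqC) : z <> 0%C -> 0 <= r -> in_l2 x -> in_l2 (Tr z r x).
Proof.
  intros Hz Hr Hx.
  assert (Hc : 0 < Cmod z). { destruct (Rle_lt_or_eq_dec 0 (Cmod z) (Cmod_ge_0 z)); auto.
      exfalso. apply Hz, Cmod_eq_0. auto. }
  unfold in_l2. apply (@ex_series_le R_AbsRing R_CompleteNormedModule _ (fun n => Q (Cmod z) r x n ^ 2)); [|apply Q_l2; auto].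
  intro n. change (norm (Cmod (Tr z r x n) ^ 2)) with (Rabs (Cmod (Tr z r x n) ^ 2)).
  rewrite Rabs_pos_eq by apply pow2_ge_0.
  pose proof (Tr_le_Q z r x n Hz Hr). pose proof (Cmod_ge_0 (Tr z r x n)).
  apply pow_incr. lra.
Qed.

Lemma Cmod_pos (z : C) : z <> 0%C -> 0 < Cmod z.
Proof. intro Hz. destruct (Rle_lt_or_eq_dec 0 (Cmod z) (Cmod_ge_0 z)); auto.
  exfalso. apply Hz, Cmod_eq_0. auto. Qed.

Section Phase.
Variable z : C.
Variable r : R.
Variable x : seqC.
Hypothesis Hz : z <> 0%C.

Definition ubar : C := (Cconj z / RtoC (Cmod z))%C.
Definition yph : seqC := fun n => (RtoC (Cmod (x n)) * ubar ^ n)%C.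

Lemma c_neq : RtoC (Cmod z) <> 0%C.
Proof. intro H. apply RtoC_inj in H. pose proof (Cmod_pos z Hz). lra. Qed.

Lemma Hinv (w : C) : (w / z = w * ubar / RtoC (Cmod z))%C.
Proof.
  unfold ubar. pose proof c_neq as Hc.
  assert (Hcz : Cconj z <> 0%C).
  { intro H. apply Hc. rewrite <- Cmod_conj, H. rewrite Cmod_0. reflexivity. }
  assert (E : (RtoC (Cmod z) * RtoC (Cmod z) = z * Cconj z)%C).
  { rewrite <- Cmod2_conj. rewrite <- RtoC_mult. f_equal. ring. }
  transitivity (w * Cconj z / (RtoC (Cmod z) * RtoC (Cmod z)))%C.
  - rewrite E. field. auto.
  - field. auto.
Qed.

Lemma Cmod_ubar : Cmod ubar = 1.
Proof. unfold ubar. rewrite Cmod_div by apply c_neq. rewrite Cmod_conj, Cmod_R.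
  pose proof (Cmod_pos z Hz). rewrite Rabs_pos_eq by lra. field. lra. Qed.

Lemma Cmod_yph n : Cmod (yph n) = Cmod (x n).
Proof. unfold yph. rewrite Cmod_mult, Cmod_pow, Cmod_ubar, pow1, Cmod_R.
  rewrite Rabs_pos_eq by apply Cmod_ge_0. ring. Qed.

Lemma Tr_phase n : Tr z r yph n = (RtoC (Q (Cmod z) r x n) * ubar ^ (S n))%C.
Proof.
  pose proof c_neq as Hc. pose proof (Cmod_pos z Hz) as Hcp.
  induction n as [|m IH]; cbn [Tr Q].
  - rewrite Hinv. unfold yph. rewrite RtoC_div by lra. cbn [Cpow]. field. auto.
  - rewrite IH, Hinv. unfold yph.
    pose proof (INRS_pos m).
    rewrite RtoC_div by lra. rewrite RtoC_plus, RtoC_div by lra.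
    rewrite RtoC_mult. cbn [Cpow]. field. split; auto. apply INRS_neq.
Qed.

Lemma Cmod_Tr_phase n : 0 <= r -> Cmod (Tr z r yph n) = Q (Cmod z) r x n.
Proof. intro Hr. rewrite Tr_phase, Cmod_mult, Cmod_pow, Cmod_ubar, pow1, Cmod_R.
  rewrite Rabs_pos_eq by (apply Q_ge0; auto; apply Cmod_pos; auto). ring. Qed.

End Phase.

Lemma T_eq (z : C) (r : R) T x : z <> 0%C -> is_l2_inverse (zmrA z r) T -> in_l2 x -> T x = Tr z r x.
Proof.
  intros Hz H Hx. destruct (H x Hx) as [_ [E _]].
  apply functional_extensionality; intro n. rewrite <- (Tr_zmrA z r (T x) Hz n), E. reflexivity.
Qed.

Lemma Tr_inv (z : C) (r : R) : z <> 0%C -> 0 <= r -> is_l2_inverse (zmrA z r) (Tr z r).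
Proof.
  intros Hz Hr x Hx. split; [apply Tr_l2; auto|]. split; [apply zmrA_Tr; auto|].
  apply functional_extensionality. apply Tr_zmrA; auto.
Qed.

Theorem lemma3p4 (r1 r2 : R) (z : C) :
  0 <= r2 -> r2 < r1 -> z <> 0%C ->
  (exists T1, is_l2_inverse (zmrA z r1) T1) /\
  (exists T2, is_l2_inverse (zmrA z r2) T2) /\
  (forall T1 T2, is_l2_inverse (zmrA z r1) T1 -> is_l2_inverse (zmrA z r2) T2 ->
     Rbar_le (opnorm T2) (opnorm T1)).
Proof.
  intros H2 H12 Hz.
  split; [exists (Tr z r1); apply Tr_inv; auto; lra|].
  split; [exists (Tr z r2); apply Tr_inv; auto; lra|].
  intros T1 T2 HT1 HT2. unfold opnorm.
  destruct (Lub_Rbar_correct (fun t => exists x, in_l2 x /\ l2norm x <= 1 /\ t = l2norm (T2 x))) as [_ Hl].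
  apply Hl. intros t [x [Hx [Hn ->]]].
  set (y := yph z x).
  assert (Hy : in_l2 y).
  { unfold in_l2. eapply ex_series_ext; [|exact Hx]. intro n. simpl. unfold y. rewrite Cmod_yph; auto. }
  assert (Hny : l2norm y = l2norm x).
  { unfold l2norm. f_equal. apply Series_ext. intro n. unfold y. rewrite Cmod_yph; auto. }
  destruct (Lub_Rbar_correct (fun t => exists x, in_l2 x /\ l2norm x <= 1 /\ t = l2norm (T1 x))) as [Hub _].
  eapply Rbar_le_trans; [|apply Hub; exists y; split; [exact Hy|split; [lra|reflexivity]]].
  simpl. rewrite (T_eq z r2 T2 x Hz HT2 Hx), (T_eq z r1 T1 y Hz HT1 Hy).
  unfold l2norm. apply sqrt_le_1_alt. apply Series_le; [|apply Tr_l2; auto; lra].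
  intro n. split; [apply pow2_ge_0|].
  apply pow_incr. split; [apply Cmod_ge_0|].
  unfold y. rewrite Cmod_Tr_phase by (auto; lra).
  eapply Rle_trans; [apply Tr_le_Q; auto|]. apply Q_mono; auto; [apply Cmod_pos; auto|lra].
Qed.
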